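(* Let $\mathcal{H}$ be a hereditary $\sigma$-ring of sets, let $\mu^*$ be an outer measure on $\mathcal{H}$, let $X$ be a set with $X\cap\bigcup\mathcal{H}\neq\emptyset$, and let $\overline{\overline{S}}$ be the class of all $\mu^{**}$-measurable sets. Then $\overline{\overline{S}}$ is a $\sigma$-ring.
   Context: A nonempty class $\mathcal{E}$ of sets is hereditary if $F\in\mathcal{E}$ whenever $E\in\mathcal{E}$ and $F\subseteq E$. A set $E\in\mathcal{H}$ is $\mu^*$-measurable if $\mu^*(A)=\mu^*(A\cap E)+\mu^*(A\cap E')$ for every $A\in\mathcal{H}$, where $E'$ denotes the complement of $E$. Let $\overline{S}$ denote the class of all $\mu^*$-measurable sets. Let $K=\{B\subseteq X: B\cap E\in\mathcal{H}\text{ for all }E\in\mathcal{H}\}$. A set $Q\in K$ is called $\mu^{**}$-measurable if $Q\cap E$ is $\mu^*$-measurable for every $\mu^*$-measurable $E\in\mathcal{H}$, i.e. for all $A\in\mathcal{H}$ and all $E\in\overline{S}$, $\mu^*(A)=\mu^*[A\cap(Q\cap E)]+\mu^*[A\cap(Q\cap E)']$. *)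

(* Defs.v *)
From HB Require Import structures.
From mathcomp Require Import all_boot all_order all_algebra.
From mathcomp Require Import all_classical all_reals all_analysis.
Set Implicit Arguments. Unset Strict Implicit. Unset Printing Implicit Defensive.
Import Order.TTheory GRing.Theory Num.Theory.
Local Open Scope classical_set_scope.
Local Open Scope ereal_scope.

Definition hereditary {T : Type} (H : set (set T)) : Prop :=
  forall E F, H E -> F `<=` E -> H F.

Definition outer_measure_on {T : Type} {R : realType}
  (H : set (set T)) (mu : set T -> \bar R) : Prop :=
  [/\ mu set0 = 0,
      (forall A, H A -> 0 <= mu A),
      (forall A B, H A -> H B -> A `<=` B -> mu A <= mu B) &
      (forall F : (set T)^nat, (forall n, H (F n)) ->
          mu (\bigcup_n F n) <= \sum_(0 <= n <oo) mu (F n))].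

Definition mu_measurable {T : Type} {R : realType}
  (H : set (set T)) (mu : set T -> \bar R) (E : set T) : Prop :=
  H E /\ forall A, H A -> mu A = mu (A `&` E) + mu (A `&` ~` E).

Definition classK {T : Type} (H : set (set T)) (X : set T) (B : set T) : Prop :=
  B `<=` X /\ forall E, H E -> H (B `&` E).

Definition mu2_measurable {T : Type} {R : realType}
  (H : set (set T)) (mu : set T -> \bar R) (X : set T) (Q : set T) : Prop :=
  classK H X Q /\
  forall A E, H A -> mu_measurable H mu E ->
    mu A = mu (A `&` (Q `&` E)) + mu (A `&` ~` (Q `&` E)).

(* Main.v *)
Require Import Defs.
From HB Require Import structures.
From mathcomp Require Import all_boot all_order all_algebra.
From mathcomp Require Import all_classical all_reals all_analysis.
Import Order.TTheory GRing.Theory Num.Theory.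
Local Open Scope classical_set_scope.
Local Open Scope ereal_scope.

Section Ext.
Variables (T : Type) (R : realType) (H : set (set T)) (mu : set T -> \bar R).
Hypotheses (sH : sigma_ring H) (hH : hereditary H) (oH : outer_measure_on H mu).

Definition mu' (A : set T) : \bar R := if `[< H A >] then mu A else +oo.

Lemma mu'E {A} : H A -> mu' A = mu A.
Proof. by move=> HA; rewrite /mu' asboolT. Qed.

Lemma mu'N {A} : ~ H A -> mu' A = +oo.
Proof. by move=> HA; rewrite /mu' asboolF. Qed.

Lemma mu'_ge0 A : 0 <= mu' A.
Proof.
case: oH => _ h0 _ _; rewrite /mu'; case: asboolP => // HA; exact: h0.
Qed.

Lemma H_setU A B : H A -> H B -> H (A `|` B).
Proof.
case: sH => H0 _ Hcup HA HB; rewrite -bigcup2E; apply: Hcup.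
by case=> [|[|n]] //=.
Qed.

Let mu'0 : mu' set0 = 0.
Proof. by case: sH => H0 _ _; rewrite mu'E //; case: oH. Qed.

Let mu'_mono : {homo mu' : A B / A `<=` B >-> A <= B}.
Proof.
move=> A B AB; have [HB|HB] := pselect (H B).
  rewrite !mu'E //; last exact: hH HB AB.
  case: oH => _ _ hm _; apply: hm => //; exact: hH HB AB.
by rewrite (mu'N HB) leey.
Qed.

Let mu'_sub : sigma_subadditive mu'.
Proof.
move=> F; have [HU|HU] := pselect (H (\bigcup_n F n)).
  have HF : forall n, H (F n) by move=> n; apply: hH HU _; exact: bigcup_sup.
  rewrite mu'E //; case: oH => _ _ _ hs.
  rewrite (eq_eseriesr (g := fun n => mu (F n))); last by move=> i _; rewrite mu'E.
  exact: hs.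
have [n Hn] : exists n, ~ H (F n).
  apply: contrapT => nex; apply: HU; case: sH => _ _; apply => n; apply: contrapT => Hn; apply: nex; by exists n.
rewrite mu'N // (@nneseries_pinfty _ _ _ n) //.
  by move=> k _; exact: mu'_ge0.
exact: mu'N.
Qed.

HB.instance Definition _ := isOuterMeasure.Build R T mu' mu'0 mu'_ge0 mu'_mono mu'_sub.

Lemma L1 Z : (forall A, H A -> mu A = mu (A `&` Z) + mu (A `&` ~` Z)) ->
  mu'.-caratheodory Z.
Proof.
move=> hZ A; have [HA|HA] := pselect (H A).
  rewrite !mu'E //; [exact: hZ | exact: hH HA _ | exact: hH HA _].
rewrite mu'N //.
have [H1|H1] := pselect (H (A `&` Z)); last first.
  by rewrite (mu'N H1) addye // gt_eqF // (lt_le_trans _ (mu'_ge0 _)) ?ltNy0.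
have [H2|H2] := pselect (H (A `&` ~` Z)); last first.
  by rewrite (mu'N H2) addey // gt_eqF // (lt_le_trans _ (mu'_ge0 _)) ?ltNy0.
exfalso; apply: HA; rewrite -(setIT A) -(setUv Z) setIUr; exact: H_setU.
Qed.

Lemma L2 Z : mu'.-caratheodory Z ->
  forall A, H A -> mu A = mu (A `&` Z) + mu (A `&` ~` Z).
Proof.
move=> cZ A HA; have := cZ A.
by rewrite !mu'E //; [exact: hH HA _ | exact: hH HA _].
Qed.

Lemma cD A B : mu'.-caratheodory A -> mu'.-caratheodory B ->
  mu'.-caratheodory (A `\` B).
Proof. exact: caratheodory_measurable_setD. Qed.

Lemma cU (F : (set T)^nat) : (forall n, mu'.-caratheodory (F n)) ->
  mu'.-caratheodory (\bigcup_n F n).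
Proof. exact: caratheodory_measurable_bigcup. Qed.

End Ext.

Theorem theorem3p2 (T : Type) (R : realType) (H : set (set T))
  (mu : set T -> \bar R) (X : set T) :
  sigma_ring H -> hereditary H -> outer_measure_on H mu ->
  X `&` \bigcup_(E in H) E !=set0 ->
  sigma_ring (mu2_measurable H mu X).
Proof.
move=> sH hH oH _.
pose M := @mu' T R H mu.
have toC : forall Q, mu2_measurable H mu X Q -> forall E, mu_measurable H mu E ->
    M.-caratheodory (Q `&` E).
  by move=> Q [_ hQ] E mE; apply: (@L1 T R H mu sH hH oH) => A HA; exact: hQ.
case: (sH) => H0 HD Hcup; split.
- split.
    split; first by [].
    by move=> E _; rewrite set0I.
  move=> A E HA _; rewrite set0I setI0 setC0 setIT.
  by case: oH => -> _ _ _; rewrite add0e.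
- move=> Q1 Q2 mQ1 mQ2; split.
    case: mQ1 => [[sQ1 hQ1] _]; split; first by move=> x [/sQ1].
    move=> E HE; apply: hH (hQ1 E HE) _; by move=> x [[]].
  move=> A E HA mE.
  have -> : (Q1 `\` Q2) `&` E = (Q1 `&` E) `\` (Q2 `&` E).
    by apply/seteqP; split => x; [move=> [[? ?] ?]; split => // -[]|move=> [[? ?] H2]; split => //; split => // ?; apply: H2].
  apply: (@L2 T R H mu hH ((Q1 `&` E) `\` (Q2 `&` E)) _ A HA).
  apply: (@cD T R H mu sH hH oH); exact: toC.
- move=> F mF; split.
    split; first by move=> x [n _ Fx]; case: (mF n) => [[sF _] _]; exact: sF.
    move=> E HE; rewrite setI_bigcupl; apply: Hcup => n.
    by case: (mF n) => [[_ hF] _]; exact: hF.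
  move=> A E HA mE; rewrite setI_bigcupl.
  apply: (@L2 T R H mu hH (\bigcup_n (F n `&` E)) _ A HA).
  apply: (@cU T R H mu sH hH oH (fun n => F n `&` E)) => n; exact: toC.
Qed.
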